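(* Let $\mathfrak n$ be a 2-step nilpotent real Lie algebra with center $\mathfrak z$, and let $\omega$ be a closed 2-form on $\mathfrak n$ with $\ker(\omega)\cap\mathfrak z=\{0\}$, where $\ker(\omega)=\{W\in\mathfrak n:\omega(W,V)=0\ \forall V\in\mathfrak n\}$. Then $\ker(\omega)$ is an abelian subalgebra of $\mathfrak n$. As a consequence: if $\langle\cdot,\cdot\rangle$ is an inner product on $\mathfrak n$, $\mathfrak v=\mathfrak z^\perp$, and $F:\mathfrak n\to\mathfrak n$ is a skew-symmetric map with $F(\mathfrak v)\subseteq\mathfrak z$, $F(\mathfrak z)\subseteq\mathfrak v$, such that $\omega(X,Y)=\langle F(X),Y\rangle$ is closed and $F(\mathfrak v)=\mathfrak z$, then $\ker(F|_{\mathfrak v})$ is an abelian subalgebra of $\mathfrak n$.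
   Context: A real Lie algebra is 2-step nilpotent if $[[U,V],W]=0$ for all $U,V,W$. A 2-form $\omega$ on $\mathfrak n$ is closed iff $\omega([U,V],W)+\omega([V,W],U)+\omega([W,U],V)=0$ for all $U,V,W\in\mathfrak n$. *)

(* Defs.v *)
From HB Require Import structures.
From mathcomp Require Import all_boot all_order all_algebra.
From mathcomp Require Import reals.
Set Implicit Arguments. Unset Strict Implicit. Unset Printing Implicit Defensive.
Import Order.TTheory GRing.Theory Num.Theory.
Local Open Scope ring_scope.

Section LieDefs.
Variables (R : realType) (V : vectType R).

Definition linear_map (F : V -> V) : Prop :=
  forall (a : R) (x y : V), F (a *: x + y) = a *: F x + F y.

Definition bilinear_form (b : V -> V -> R) : Prop :=
  (forall (a : R) (x y z : V), b (a *: x + y) z = a * b x z + b y z) /\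
  (forall (a : R) (x y z : V), b x (a *: y + z) = a * b x y + b x z).

Definition lie_bracket (br : V -> V -> V) : Prop :=
  [/\ (forall (a : R) (x y z : V), br (a *: x + y) z = a *: br x z + br y z),
      (forall (a : R) (x y z : V), br x (a *: y + z) = a *: br x y + br x z),
      (forall x : V, br x x = 0) &
      (forall x y z : V, br x (br y z) + br y (br z x) + br z (br x y) = 0)].

Definition two_step_nilpotent (br : V -> V -> V) : Prop :=
  forall u v w : V, br (br u v) w = 0.

Definition center (br : V -> V -> V) (Z : V) : Prop :=
  forall U : V, br Z U = 0.

Definition two_form (w : V -> V -> R) : Prop :=
  bilinear_form w /\ (forall x : V, w x x = 0).

Definition closed_form (br : V -> V -> V) (w : V -> V -> R) : Prop :=
  forall U W X : V, w (br U W) X + w (br W X) U + w (br X U) W = 0.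

Definition form_kernel (w : V -> V -> R) (X : V) : Prop :=
  forall Y : V, w X Y = 0.

Definition subspace (S : V -> Prop) : Prop :=
  S 0 /\ (forall (a : R) (x y : V), S x -> S y -> S (a *: x + y)).

Definition abelian_subalgebra (br : V -> V -> V) (S : V -> Prop) : Prop :=
  [/\ subspace S,
      (forall x y : V, S x -> S y -> S (br x y)) &
      (forall x y : V, S x -> S y -> br x y = 0)].

Definition inner_product (ip : V -> V -> R) : Prop :=
  [/\ bilinear_form ip, (forall x y : V, ip x y = ip y x) &
      (forall x : V, x != 0 -> 0 < ip x x)].

End LieDefs.

(* Main.v *)
Require Import Defs.
From HB Require Import structures.
From mathcomp Require Import all_boot all_order all_algebra.
From mathcomp Require Import reals.
From mathcomp Require Import lra.
Import Order.TTheory GRing.Theory Num.Theory.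
Local Open Scope ring_scope.

Lemma self_add_eq0 (M : zmodType) (t : M) : t = t + t -> t = 0.
Proof. by move=> h; apply: (@addIr _ t); rewrite add0r -h. Qed.

Lemma negself_eq0 (R : realType) (t : R) : t = - t -> t = 0.
Proof. move=> h; lra. Qed.

Lemma part1 (R : realType) (V : vectType R) (br : V -> V -> V) :
  lie_bracket br -> two_step_nilpotent br ->
  (forall w : V -> V -> R,
     two_form w -> closed_form br w ->
     (forall Z : V, form_kernel w Z -> center br Z -> Z = 0) ->
     abelian_subalgebra br (form_kernel w)).
Proof.
move=> [bl br_r alt jac] nil w [[wl wr] walt] cl hk.
have w0 : forall z, w 0 z = 0.
  move=> z; apply: self_add_eq0; have := wl 1 0 0 z.
  by rewrite scale1r addr0 mul1r.
have wanti : forall x y, w x y = - w y x.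
  move=> x y; have := walt (1 *: x + y).
  rewrite wl wr wr walt walt !mul1r => h.
  by apply/eqP; rewrite -addr_eq0; apply/eqP; rewrite -h addr0 add0r.
have comm : forall x y, form_kernel w x -> form_kernel w y -> br x y = 0.
  move=> x y hx hy; apply: hk.
  - move=> T; have := cl x y T.
    rewrite (wanti (br y T)) hx (wanti (br T x)) hy.
    by rewrite oppr0 !addr0.
  - by move=> U; apply: nil.
split.
- split; first by move=> y; apply: w0.
  by move=> a x y hx hy z; rewrite wl hx hy mulr0 addr0.
- by move=> x y hx hy; rewrite comm // => z; apply: w0.
- exact: comm.
Qed.

Theorem mainTheorem4 (R : realType) (V : vectType R) (br : V -> V -> V) :
  lie_bracket br -> two_step_nilpotent br ->
  (forall w : V -> V -> R,
     two_form w -> closed_form br w ->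
     (forall Z : V, form_kernel w Z -> center br Z -> Z = 0) ->
     abelian_subalgebra br (form_kernel w))
  /\
  (forall (ip : V -> V -> R) (F : V -> V),
     inner_product ip -> linear_map F ->
     (forall X Y : V, ip (F X) Y = - ip X (F Y)) ->
     let v := fun X : V => forall Z : V, center br Z -> ip X Z = 0 in
     (forall X : V, v X -> center br (F X)) ->
     (forall Z : V, center br Z -> v (F Z)) ->
     closed_form br (fun X Y => ip (F X) Y) ->
     (forall Z : V, center br Z <-> exists2 X : V, v X & F X = Z) ->
     abelian_subalgebra br (fun X : V => v X /\ F X = 0)).
Proof.
move=> hL hN; have P1 := @part1 R V br hL hN; split => //.
move=> ip F [[il ir] isym ipos] Flin Fskew v hv hz cl hsurj.
have ip0 : forall z, ip 0 z = 0.
  move=> z; apply: self_add_eq0; have := il 1 0 0 z.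
  by rewrite scale1r addr0 mul1r.
have ip0r : forall z, ip z 0 = 0 by move=> z; rewrite isym ip0.
have F0 : F 0 = 0.
  apply: self_add_eq0; have := Flin 1 0 0.
  by rewrite !scale1r addr0.
have ipdef : forall x, ip x x = 0 -> x = 0.
  move=> x h; apply/eqP; apply/negPn/negP => /ipos; rewrite h ltxx //.
have hw : abelian_subalgebra br (form_kernel (fun X Y => ip (F X) Y)).
  apply: P1; [ |exact: cl| ].
  - split; first split.
    + by move=> a x y z; rewrite Flin il.
    + by move=> a x y z; rewrite ir.
    + move=> x; have := Fskew x x; rewrite isym => h.
      exact: negself_eq0.
  - move=> Z hZ cZ.
    have FZ : F Z = 0 by apply: ipdef; apply: hZ.
    have [X vX FX] := (hsurj Z).1 cZ.
    apply: ipdef; rewrite -FX Fskew FX FZ ip0r oppr0 //.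
have [[_ _] _ hc] := hw.
have inK : forall x, F x = 0 -> form_kernel (fun X Y => ip (F X) Y) x.
  by move=> x hx y /=; rewrite hx ip0.
have comm : forall x y, v x /\ F x = 0 -> v y /\ F y = 0 -> br x y = 0.
  by move=> x y [_ hx] [_ hy]; apply: hc; apply: inK.
split.
- split; first by split; [move=> Z _; apply: ip0 | exact F0].
  move=> a x y [vx Fx] [vy Fy]; split.
  + by move=> Z cZ; rewrite il vx // vy // mulr0 addr0.
  + by rewrite Flin Fx Fy scaler0 addr0.
- move=> x y hx hy; rewrite comm //; split; [move=> Z _; apply: ip0 | exact F0].
- exact: comm.
Qed.
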